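(* Let $\mathbb{F}$ be an algebraically closed field of characteristic $2$. Let $A_1,\dots,A_4,B_1,\dots,B_4\in M(2)$ satisfy the Standing Hypothesis, and suppose $A_1=\begin{pmatrix}a_1&1\\0&a_1\end{pmatrix}$ and $B_1=\begin{pmatrix}b_1&1\\0&b_1\end{pmatrix}$ for some $a_1,b_1\in\mathbb{F}$. Then $\mathrm{tr}(A_1A_2A_3A_4)=\mathrm{tr}(B_1B_2B_3B_4)$.
   Context: $M(2)$ is the space of $2\times 2$ matrices over $\mathbb{F}$. Standing Hypothesis: $\mathrm{tr}(A_i)=\mathrm{tr}(B_i)$ and $\det(A_i)=\det(B_i)$ for $1\le i\le 4$; $\mathrm{tr}(A_iA_j)=\mathrm{tr}(B_iB_j)$ for $1\le i<j\le 4$; $\mathrm{tr}(A_iA_jA_k)=\mathrm{tr}(B_iB_jB_k)$ for $1\le i<j<k\le 4$. *)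

(* Defs.v *)
From HB Require Import structures.
From mathcomp Require Import all_boot all_order all_algebra.
Set Implicit Arguments. Unset Strict Implicit. Unset Printing Implicit Defensive.
Import GRing.Theory.
Local Open Scope ring_scope.

Definition standing_hyp (F : comNzRingType)
  (A1 A2 A3 A4 B1 B2 B3 B4 : 'M[F]_2) : Prop :=
  [/\
      [/\ \tr A1 = \tr B1, \tr A2 = \tr B2, \tr A3 = \tr B3 & \tr A4 = \tr B4],
      [/\ \det A1 = \det B1, \det A2 = \det B2, \det A3 = \det B3
        & \det A4 = \det B4],
      [/\ \tr (A1 *m A2) = \tr (B1 *m B2), \tr (A1 *m A3) = \tr (B1 *m B3),
          \tr (A1 *m A4) = \tr (B1 *m B4), \tr (A2 *m A3) = \tr (B2 *m B3)
        & \tr (A2 *m A4) = \tr (B2 *m B4) /\ \tr (A3 *m A4) = \tr (B3 *m B4)]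
    &
      [/\ \tr (A1 *m A2 *m A3) = \tr (B1 *m B2 *m B3),
          \tr (A1 *m A2 *m A4) = \tr (B1 *m B2 *m B4),
          \tr (A1 *m A3 *m A4) = \tr (B1 *m B3 *m B4)
        & \tr (A2 *m A3 *m A4) = \tr (B2 *m B3 *m B4)]].

Definition jordan2 (F : nzRingType) (a : F) : 'M[F]_2 :=
  \matrix_(i < 2, j < 2)
    (if i == j then a else if ((i : nat) == 0%N) && ((j : nat) == 1%N) then 1 else 0).

(* Main.v *)
Require Import Defs.
From HB Require Import structures.
From mathcomp Require Import all_boot all_order all_algebra.
From mathcomp Require Import ring.
Import GRing.Theory.
Local Open Scope ring_scope.
Local Notation i0 := (@ord0 1).
Local Notation i1 := (@lift 2 ord0 ord0).

Section H1.
Variable R : comNzRingType.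
Lemma mul2E (A B : 'M[R]_2) i j : (A *m B) i j = A i i0 * B i0 j + A i i1 * B i1 j.
Proof. by rewrite !mxE !big_ord_recl big_ord0 addr0. Qed.
Lemma tr2E (A : 'M[R]_2) : \tr A = A i0 i0 + A i1 i1.
Proof. by rewrite /mxtrace !big_ord_recl big_ord0 addr0. Qed.
Lemma det2E (A : 'M[R]_2) : \det A = A i0 i0 * A i1 i1 - A i0 i1 * A i1 i0.
Proof.
rewrite (expand_det_row _ ord0) !big_ord_recl big_ord0 addr0 /cofactor.
rewrite !det_mx11 !mxE /=.
have e1 : lift i0 (0:'I_1) = i1 by apply/val_inj.
have e2 : lift i1 (0:'I_1) = i0 by apply/val_inj.
by rewrite e1 e2 /= expr0 expr1 mul1r mulN1r mulrN.
Qed.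

Lemma sqE (C : 'M[R]_2) : (C *m C) i1 i0 = C i1 i0 * \tr C.
Proof. rewrite !mul2E !tr2E; ring. Qed.
Lemma trsqE (C : 'M[R]_2) : \tr (C *m C) = \tr C ^+ 2 - 2%:R * \det C.
Proof. rewrite !tr2E !mul2E det2E; ring. Qed.
Lemma swapE (X Y : 'M[R]_2) :
  (X *m Y) i1 i0 = X i1 i0 * \tr Y + Y i1 i0 * \tr X - (Y *m X) i1 i0.
Proof. rewrite !mul2E !tr2E; ring. Qed.
Lemma zeroE (X Y Z : 'M[R]_2) : X i1 i0 = 0 -> Y i1 i0 = 0 -> Z i1 i0 = 0 ->
  (X *m Y *m Z) i1 i0 = 0.
Proof. move=> hx hy hz; rewrite !mul2E hx hy hz; ring. Qed.
Lemma trJ (a : R) (X : 'M[R]_2) : \tr (jordan2 a *m X) = a * \tr X + X i1 i0.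
Proof. rewrite !tr2E !mul2E !mxE /=; ring. Qed.
Lemma detJ (a : R) : \det (jordan2 a) = a * a.
Proof. rewrite det2E !mxE /=; ring. Qed.
End H1.

Section H2.
Variable F : fieldType.
Definition T3 (px qx rx sx py qy ry sy pz qz rz sz : F) :=
  rx * (py * pz + qy * rz) + sx * (ry * pz + sy * rz).
Definition np (rc tc r m : F) := (m - tc * r) / rc.
Definition nq (rc tc dc r t m f : F) :=
  (f + dc / rc * r - tc * (t - np rc tc r m)) / rc.
Definition ns (rc tc r t m : F) := t - np rc tc r m.
Definition Tn (rc tc dc rx tx mx fx ry ty my fy rz tz mz fz : F) :=
  T3 (np rc tc rx mx) (nq rc tc dc rx tx mx fx) rx (ns rc tc rx tx mx)
     (np rc tc ry my) (nq rc tc dc ry ty my fy) ry (ns rc tc ry ty my)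
     (np rc tc rz mz) (nq rc tc dc rz tz mz fz) rz (ns rc tc rz tz mz).
Lemma pivotS (pc qc rc sc px qx rx sx py qy ry sy pz qz rz sz : F) : rc != 0 ->
  T3 px qx rx sx py qy ry sy pz qz rz sz =
  Tn rc (pc + sc) (pc * sc - qc * rc)
     rx (px + sx) (rc * px + sc * rx) (pc * px + qc * rx + rc * qx + sc * sx)
     ry (py + sy) (rc * py + sc * ry) (pc * py + qc * ry + rc * qy + sc * sy)
     rz (pz + sz) (rc * pz + sc * rz) (pc * pz + qc * rz + rc * qz + sc * sz).
Proof. move=> hc. rewrite /Tn /T3 /nq /ns /np. field. exact: hc. Qed.

Lemma pivotM (C X Y Z : 'M[F]_2) : C i1 i0 != 0 ->
  (X *m Y *m Z) i1 i0 =
  Tn (C i1 i0) (\tr C) (\det C)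
     (X i1 i0) (\tr X) ((C *m X) i1 i0) (\tr (C *m X))
     (Y i1 i0) (\tr Y) ((C *m Y) i1 i0) (\tr (C *m Y))
     (Z i1 i0) (\tr Z) ((C *m Z) i1 i0) (\tr (C *m Z)).
Proof.
move=> hc.
rewrite [LHS](_ : _ = T3 (X i0 i0) (X i0 i1) (X i1 i0) (X i1 i1)
  (Y i0 i0) (Y i0 i1) (Y i1 i0) (Y i1 i1) (Z i0 i0) (Z i0 i1) (Z i1 i0) (Z i1 i1));
  last by rewrite /T3 !mul2E; ring.
rewrite (pivotS (C i0 i0) (C i0 i1) _ (C i1 i1) _ _ _ _ _ _ _ _ _ _ _ _ hc).
by rewrite !tr2E !mul2E det2E !addrA.
Qed.
End H2.

Theorem lemma7 (F : closedFieldType) (hchar : 2%N \in [pchar F])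
  (A1 A2 A3 A4 B1 B2 B3 B4 : 'M[F]_2) (a1 b1 : F) :
  standing_hyp A1 A2 A3 A4 B1 B2 B3 B4 ->
  A1 = jordan2 a1 -> B1 = jordan2 b1 ->
  \tr (A1 *m A2 *m A3 *m A4) = \tr (B1 *m B2 *m B3 *m B4).
Proof.
case=> [[t1 t2 t3 t4] [d1 d2 d3 d4] [f12 f13 f14 f23 [f24 f34]] [g123 g124 g134 g234]] eA eB.
subst A1 B1.
have eab : a1 = b1.
  move: d1; rewrite !detJ => d1.
  have : (a1 - b1) * (a1 - b1) = 0.
    have -> : (a1 - b1) * (a1 - b1) = a1*a1 - b1*b1 - (a1*b1 + a1*b1) + (b1*b1 + b1*b1) by ring.
    by rewrite d1 !(addrr_pchar2 hchar) subrr subr0 addr0.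
  by move/eqP; rewrite mulf_eq0 orbb subr_eq0 => /eqP.
subst b1.
have r2 : A2 i1 i0 = B2 i1 i0 by move: f12; rewrite !trJ t2 => /addrI.
have r3 : A3 i1 i0 = B3 i1 i0 by move: f13; rewrite !trJ t3 => /addrI.
have r4 : A4 i1 i0 = B4 i1 i0 by move: f14; rewrite !trJ t4 => /addrI.
have m23 : (A2 *m A3) i1 i0 = (B2 *m B3) i1 i0
  by move: g123; rewrite -!mulmxA !trJ f23 => /addrI.
have m24 : (A2 *m A4) i1 i0 = (B2 *m B4) i1 i0
  by move: g124; rewrite -!mulmxA !trJ f24 => /addrI.
have m34 : (A3 *m A4) i1 i0 = (B3 *m B4) i1 i0
  by move: g134; rewrite -!mulmxA !trJ f34 => /addrI.
rewrite -!mulmxA !trJ !mulmxA g234; congr (_ + _).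
have [h2|h2] := eqVneq (A2 i1 i0) 0.
  have [h3|h3] := eqVneq (A3 i1 i0) 0.
    have [h4|h4] := eqVneq (A4 i1 i0) 0.
      by rewrite zeroE // zeroE // -?r2 -?r3 -?r4.
    have h4' : B4 i1 i0 != 0 by rewrite -r4.
    rewrite (@pivotM _ A4 A2 A3 A4 h4) (@pivotM _ B4 B2 B3 B4 h4') !sqE !trsqE.
    rewrite (@swapE _ A4 A2) (@swapE _ B4 B2) (@swapE _ A4 A3) (@swapE _ B4 B3).
    rewrite (mxtrace_mulC A4 A2) (mxtrace_mulC B4 B2) (mxtrace_mulC A4 A3) (mxtrace_mulC B4 B3).
    by rewrite m24 m34 f24 f34 t2 t3 t4 d4 r2 r3 r4.
  have h3' : B3 i1 i0 != 0 by rewrite -r3.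
  rewrite (@pivotM _ A3 A2 A3 A4 h3) (@pivotM _ B3 B2 B3 B4 h3') !sqE !trsqE.
  rewrite (@swapE _ A3 A2) (@swapE _ B3 B2) (mxtrace_mulC A3 A2) (mxtrace_mulC B3 B2).
  by rewrite m23 m34 f23 f34 t2 t3 t4 d3 r2 r3 r4.
have h2' : B2 i1 i0 != 0 by rewrite -r2.
rewrite (@pivotM _ A2 A2 A3 A4 h2) (@pivotM _ B2 B2 B3 B4 h2') !sqE !trsqE.
by rewrite m23 m24 f23 f24 t2 t3 t4 d2 r2 r3 r4.
Qed.
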